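(* Let $N=2^\ell$ ($\ell$ a positive integer), $\omega=e^{2\pi\mathbf{i}/N}$, and let $C_2\subseteq C_1\subseteq\mathbb{F}_2^n$ be linear codes with bases $\beta_2\subseteq\beta_1$, respectively, and $Q=Q(C_1,C_2)$. Assume $\beta_1\setminus\beta_2=\{w_1,\ldots,w_K\}$, used as the encoding of $Q$, and let $b\in H_N$. For nonempty $J=\{j_1,\ldots,j_h\}\subseteq[K]$ define $$a_{J,b}=(-2)^{h-1}\, b\cdot(w_{j_1}\star\cdots\star w_{j_h})\bmod N.$$ Then the logical action of $U(b)$ is $$\overline{U(b)}=\prod_{h=1}^K\ \prod_{\substack{J\subseteq[K]\\ |J|=h}} C_J\text{-}U(a_{J,b}).$$
   Context: Vectors of $\mathbb{F}_2^n$ are lifted to $\{0,1\}^n\subseteq\mathbb{Z}_N^n$, $\star$ is the componentwise product, and $b\cdot x=\sum_ib_ix_i\bmod N$. $U(a)=\mathrm{diag}(1,\omega^a)$, $U(b)=\bigotimes_iU(b_i)$. $Q(C_1,C_2)$ is the subspace of $(\mathbb{C}^2)^{\otimes n}$ stabilized by all $X(u)Z(v)$, $u\in C_2$, $v\in C_1^\perp$; $H_N=\{b\in\mathbb{Z}_N^n:U(b)Q=Q\}$. The logical states are $|v\rangle_L=|C_2|^{-1/2}\sum_{u\in C_2}|u+\sum_iv_iw_i\rangle$ for $v\in\mathbb{F}_2^K$, and the logical action of $U$ with $UQ=Q$ is $\mathcal{E}^{-1}U\mathcal{E}$ on $(\mathbb{C}^2)^{\otimes K}$ with $\mathcal{E}:|v\rangle\mapsto|v\rangle_L$.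 For $v\in\mathbb{F}_2^K$ and $J\subseteq[K]$, $v_J=\prod_{i\in J}v_i$, and for $a\in\mathbb{Z}_N$ the controlled gate on $(\mathbb{C}^2)^{\otimes K}$ is $C_J\text{-}U(a)=\sum_{v:\,v_J=0}|v\rangle\langle v|+\omega^a\sum_{v:\,v_J=1}|v\rangle\langle v|$. *)

(* Defs.v *)
From HB Require Import structures.
From mathcomp Require Import all_boot all_order all_algebra all_field.
From mathcomp Require Import reals trigo.
From mathcomp Require Import complex.

Set Implicit Arguments.
Unset Strict Implicit.
Unset Printing Implicit Defensive.

Import Order.TTheory GRing.Theory Num.Theory.
Local Open Scope ring_scope.
Local Open Scope complex_scope.

Section QDefs.
Variable R : realType.
Local Notation C := (R[i]).

Definition omega (N : nat) : C :=
  Complex (cos (2 * pi / N%:R)) (sin (2 * pi / N%:R)).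

Definition omega_pow (N : nat) (a : 'Z_N) : C := omega N ^+ (nat_of_ord a).

(* vectors of F_2^n are row vectors 'rV['F_2]_n;
   lifting F_2^n -> {0,1}^n \subseteq Z_N^n *)
Definition lift (N n : nat) (x : 'rV['F_2]_n) : 'rV['Z_N]_n :=
  \row_i (nat_of_ord (x ord0 i))%:R.

Definition star (N n : nat) (x y : 'rV['Z_N]_n) : 'rV['Z_N]_n :=
  \row_i (x ord0 i * y ord0 i).

Definition dotN (N n : nat) (b x : 'rV['Z_N]_n) : 'Z_N :=
  \sum_i b ord0 i * x ord0 i.

Definition dot2 (n : nat) (x y : 'rV['F_2]_n) : 'F_2 :=
  \sum_i x ord0 i * y ord0 i.

Definition dual (n : nat) (C1 : {vspace 'rV['F_2]_n}) : pred 'rV['F_2]_n :=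
  fun v => [forall c, (c \in C1) ==> (dot2 v c == 0)].

(* state space (C^2)^{\otimes n}: functions from computational basis
   labels F_2^n to C; operators are maps on this space *)
Definition state (m : nat) := 'rV['F_2]_m -> C.

(* X(u) |x> = |x + u>, so (X(u) psi)(x) = psi(x + u) *)
Definition Xop (n : nat) (u : 'rV['F_2]_n) (psi : state n) : state n :=
  fun x => psi (x + u).

Definition Zop (n : nat) (v : 'rV['F_2]_n) (psi : state n) : state n :=
  fun x => (if dot2 v x == 1 then -1 else 1) * psi x.

(* U(a) = diag(1, omega^a);  U(b) = \bigotimes_i U(b_i) *)
Definition Uop (N n : nat) (b : 'rV['Z_N]_n) (psi : state n) : state n :=
  fun x => (\prod_i (if x ord0 i == 1 then omega_pow (b ord0 i) else 1)) * psi x.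

Definition Qcode (n : nat) (C1 C2 : {vspace 'rV['F_2]_n}) : state n -> Prop :=
  fun psi => forall u v, u \in C2 -> dual C1 v -> Xop u (Zop v psi) = psi.

Definition H_N (N n : nat) (C1 C2 : {vspace 'rV['F_2]_n}) (b : 'rV['Z_N]_n) : Prop :=
  forall psi, Qcode C1 C2 psi <-> exists2 phi, Qcode C1 C2 phi & psi = Uop b phi.

Definition logical_state (n K : nat) (C2 : {vspace 'rV['F_2]_n})
    (w : 'I_K -> 'rV['F_2]_n) (v : 'rV['F_2]_K) : state n :=
  fun x => (sqrtC (#|[pred u : 'rV['F_2]_n | u \in C2]|%:R : C))^-1 *
           \sum_(u : 'rV['F_2]_n | u \in C2)
              (if x == u + \sum_i v ord0 i *: w i then 1 else 0).

Definition encode (n K : nat) (C2 : {vspace 'rV['F_2]_n})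
    (w : 'I_K -> 'rV['F_2]_n) (phi : state K) : state n :=
  fun x => \sum_(v : 'rV['F_2]_K) phi v * logical_state C2 w v x.

(* L is the logical action of U, i.e. L = E^{-1} U E, expressed as U o E = E o L
   (E is injective with image Q) *)
Definition is_logical_action (n K : nat) (C2 : {vspace 'rV['F_2]_n})
    (w : 'I_K -> 'rV['F_2]_n) (U : state n -> state n) (L : state K -> state K) :=
  forall phi, U (encode C2 w phi) = encode C2 w (L phi).

Definition vJ (K : nat) (J : {set 'I_K}) (v : 'rV['F_2]_K) : 'F_2 :=
  \prod_(i in J) v ord0 i.

Definition CU (N K : nat) (J : {set 'I_K}) (a : 'Z_N) (phi : state K) : state K :=
  fun v => (if vJ J v == 1 then omega_pow a else 1) * phi v.

Definition aJb (N n K : nat) (w : 'I_K -> 'rV['F_2]_n) (b : 'rV['Z_N]_n)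
    (J : {set 'I_K}) : 'Z_N :=
  (- 2) ^+ (#|J|.-1) *
  dotN b (\big[@star N n/const_mx 1]_(j in J) lift N (w j)).

Definition prod_ops (m : nat) (s : seq (state m -> state m)) : state m -> state m :=
  foldr (fun A B => A \o B) id s.

Definition logical_gate (N n K : nat) (w : 'I_K -> 'rV['F_2]_n) (b : 'rV['Z_N]_n)
    : state K -> state K :=
  prod_ops (flatten [seq [seq CU J (aJb w b J) | J <- enum [set J : {set 'I_K} | #|J| == h]]
                    | h <- iota 1 K]).

End QDefs.

(* Main.v *)
Require Import Defs.
From HB Require Import structures.
From mathcomp Require Import all_boot all_order all_algebra all_field.
From mathcomp Require Import reals trigo.
From mathcomp Require Import complex.
From mathcomp Require Import ring lra.
From mathcomp Require Import boolp.
Set Implicit Arguments. Unset Strict Implicit. Unset Printing Implicit Defensive.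
Import Order.TTheory GRing.Theory Num.Theory.
Local Open Scope ring_scope.
Section Om.
Variable R : realType.
Local Notation C := (R[i]).

Lemma omega_exp (N k : nat) :
  omega R N ^+ k = Complex (cos ((2 * pi / N%:R) *+ k)) (sin ((2 * pi / N%:R) *+ k)).
Proof.
elim: k => [|k IH]; first by rewrite expr0 !mulr0n cos0 sin0.
rewrite exprSr IH /omega.
set t := 2 * pi / N%:R.
rewrite (mulrSr t) cosD sinD /=.
congr Complex; ring.
Qed.

Lemma omega_N (N : nat) : (0 < N)%N -> omega R N ^+ N = 1.
Proof.
move=> N0; rewrite omega_exp -mulr_natr mulfVK; last by rewrite pnatr_eq0 -lt0n.
by rewrite mulr_natl cos2pi sin2pi.
Qed.

Lemma omega_mod (N m : nat) : (0 < N)%N -> omega R N ^+ (m %% N) = omega R N ^+ m.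
Proof.
move=> N0; rewrite {2}(divn_eq m N) exprD mulnC exprM omega_N // expr1n mul1r //.
Qed.
End Om.
Section Opow.
Variable R : realType.
Variable N : nat.
Hypothesis N1 : (1 < N)%N.
Local Notation e := (omega_pow R (N:=N)).

Lemma e0 : e 0 = 1.
Proof. by rewrite /omega_pow expr0. Qed.

Lemma eD (a b : 'Z_N) : e (a + b) = e a * e b.
Proof.
rewrite /omega_pow -exprD -[RHS](omega_mod R _ (ltnW N1)); congr (_ ^+ _).
rewrite /=; move: (_ + _)%N => m; by rewrite Zp_cast.
Qed.

Lemma e_sum (I : Type) (r : seq I) (P : pred I) (F : I -> 'Z_N) :
  e (\sum_(i <- r | P i) F i) = \prod_(i <- r | P i) e (F i).
Proof. exact: (big_morph e eD e0). Qed.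
End Opow.
Lemma F2_cases (x : 'F_2) : x = 0 \/ x = 1.
Proof.
case: x => [[|[|m]] Hm]; [left|right|by []]; exact: val_inj.
Qed.

Section U.
Variable R : realType.
Variable N : nat.
Hypothesis N1 : (1 < N)%N.
Local Notation e := (omega_pow R (N:=N)).

Lemma Uop_eq n (b : 'rV['Z_N]_n) (psi : state R n) x :
  Uop b psi x = e (dotN b (Defs.lift N x)) * psi x.
Proof.
rewrite /Uop /dotN (e_sum R N1); congr (_ * _); apply: eq_bigr => i _.
rewrite mxE; case: (F2_cases (x ord0 i)) => ->.
  by rewrite /= mulr0 (e0 R).
by rewrite /= mulr1.
Qed.
End U.

Lemma parity_int (I : finType) (a : I -> 'F_2) :
  1 - 2 * ((nat_of_ord ((\sum_i a i)%R : 'F_2))%:Z) = \prod_i (1 - 2 * ((nat_of_ord (a i))%:Z)).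
Proof.
apply: (big_rec2 (fun (s : 'F_2) (p : int) => 1 - 2 * (s : nat)%:Z = p)).
  by [].
move=> i s p _ <-.
by case: (F2_cases (a i)) => ->; case: (F2_cases s) => ->.
Qed.
Lemma xor_int (I : finType) (a : I -> 'F_2) :
  (nat_of_ord ((\sum_i a i)%R : 'F_2))%:Z =
  \sum_(J : {set I} | J != set0) (-2) ^+ (#|J|.-1) * \prod_(j in J) (nat_of_ord (a j))%:Z.
Proof.
set X := (nat_of_ord _)%:Z.
have H1 := parity_int a.
have H2 : \prod_i (1 - 2 * (nat_of_ord (a i))%:Z) =
   \sum_(J : {set I}) (-2) ^+ #|J| * \prod_(j in J) (nat_of_ord (a j))%:Z.
  under eq_bigr => i _ do rewrite addrC -mulNr.
  rewrite (bigA_distr 1 +%R (fun i => -2 * (nat_of_ord (a i))%:Z) (fun=> 1)).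
  apply: eq_bigr => J _.
  by rewrite -big_mkcond /= big_split /= prodr_const.
rewrite H2 (bigD1 set0) //= cards0 expr0 big_set0 mul1r in H1.
have : (-2) * X = (-2) * \sum_(J : {set I} | J != set0) (-2) ^+ (#|J|.-1) * \prod_(j in J) (nat_of_ord (a j))%:Z.
  rewrite big_distrr /=.
  have -> : -2 * X = \sum_(J : {set I} | J != set0) (-2) ^+ #|J| * \prod_(j in J) (nat_of_ord (a j))%:Z.
    by apply/(addrI 1); rewrite -H1 mulNr.
  apply: eq_bigr => J HJ; rewrite mulrA -exprS prednK // card_gt0 //.
by move/mulfI; apply.
Qed.
Lemma xor_ring (Rg : comPzRingType) (I : finType) (a : I -> 'F_2) :
  (nat_of_ord ((\sum_i a i)%R : 'F_2))%:R =
  \sum_(J : {set I} | J != set0) (-2) ^+ (#|J|.-1) * \prod_(j in J) (nat_of_ord (a j))%:R :> Rg.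
Proof.
transitivity (((nat_of_ord ((\sum_i a i)%R : 'F_2))%:Z)%:~R : Rg); first by [].
rewrite xor_int rmorph_sum; apply: eq_bigr => J _.
by rewrite rmorphM rmorphXn rmorph_prod rmorphN /=.
Qed.
Section Main.
Variable N : nat.
Hypothesis N1 : (1 < N)%N.

Lemma liftM (x y : 'F_2) : (nat_of_ord (x * y))%:R = (nat_of_ord x)%:R * (nat_of_ord y)%:R :> 'Z_N.
Proof. by case: (F2_cases x) => ->; case: (F2_cases y) => ->; rewrite /= ?mul0r ?mulr0 ?mul1r. Qed.

Lemma lift_prod (I : Type) (r : seq I) (P : pred I) (F : I -> 'F_2) :
  (nat_of_ord (\prod_(i <- r | P i) F i))%:R = \prod_(i <- r | P i) (nat_of_ord (F i))%:R :> 'Z_N.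
Proof. by apply: (big_morph (fun x : 'F_2 => (nat_of_ord x)%:R : 'Z_N) liftM). Qed.

Lemma star_prod n (I : Type) (r : seq I) (P : pred I) (F : I -> 'rV['Z_N]_n) c :
  (\big[@star N n/const_mx 1]_(i <- r | P i) F i) ord0 c = \prod_(i <- r | P i) F i ord0 c.
Proof.
apply: (big_morph (fun M : 'rV['Z_N]_n => M ord0 c)).
  by move=> x y; rewrite /star mxE.
by rewrite mxE.
Qed.

Lemma dot_lift n K (w : 'I_K -> 'rV['F_2]_n) (b : 'rV['Z_N]_n) (v : 'rV['F_2]_K) :
  dotN b (Defs.lift N (\sum_i v ord0 i *: w i)) =
  \sum_(J : {set 'I_K} | J != set0) (if vJ J v == 1 then aJb w b J else 0).
Proof.
have Hc c : Defs.lift N (\sum_i v ord0 i *: w i) ord0 c =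
   \sum_(J : {set 'I_K} | J != set0) (-2) ^+ (#|J|.-1) *
      ((nat_of_ord (vJ J v))%:R * \prod_(j in J) (nat_of_ord (w j ord0 c))%:R).
  rewrite mxE summxE (eq_bigr (fun i => v ord0 i * w i ord0 c)); last by move=> i _; rewrite mxE.
  rewrite xor_ring; apply: eq_bigr => J _; congr (_ * _).
  rewrite /vJ lift_prod -big_split /=; apply: eq_bigr => j _; exact: liftM.
rewrite /dotN.
under eq_bigr => c _ do rewrite Hc big_distrr /=.
rewrite exchange_big /=; apply: eq_bigr => J _.
rewrite /aJb /dotN.
case: (F2_cases (vJ J v)) => ->.
  by rewrite /= big1 // => i _; rewrite mul0r !mulr0.
have h1 : ((nat_of_ord (1:'F_2))%:R : 'Z_N) = 1 by rewrite (_ : nat_of_ord (1 : 'F_2) = 1%N).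
rewrite h1 eqxx big_distrr /=.
under eq_bigr => i _ do rewrite mul1r.
under [RHS]eq_bigr => i _ do rewrite mulrCA star_prod.
apply: eq_bigr => c _; congr (_ * (_ * _)).
by apply: eq_bigr => j _; rewrite mxE.
Qed.
End Main.
Section Gate.
Variable R : realType.
Local Notation C := (R[i]).

Lemma prod_if_seq (T : eqType) (r : seq T) (k : T) (x : C) :
  uniq r -> \prod_(h <- r) (if k == h then x else 1) = if k \in r then x else 1.
Proof.
elim: r => [|h r IH] /=; first by rewrite big_nil.
move=> /andP[hr ur]; rewrite big_cons IH // in_cons.
case: eqP => [->|_] /=; last by rewrite mul1r.
by rewrite (negbTE hr) mulr1.
Qed.

Lemma prod_ops_map K (s : seq {set 'I_K}) (f : {set 'I_K} -> state R K -> state R K)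
  (g : {set 'I_K} -> 'rV['F_2]_K -> C) :
  (forall J phi v, f J phi v = g J v * phi v) ->
  forall phi v, prod_ops [seq f J | J <- s] phi v = (\prod_(J <- s) g J v) * phi v.
Proof.
move=> Hf phi v; elim: s v => [|J s IH] v /=; first by rewrite big_nil mul1r.
by rewrite Hf IH big_cons mulrA.
Qed.

Lemma gate_eq N n K (w : 'I_K -> 'rV['F_2]_n) (b : 'rV['Z_N]_n) (phi : state R K) v :
  logical_gate w b phi v =
  (\prod_(J : {set 'I_K} | J != set0)
      (if vJ J v == 1 then omega_pow R (aJb w b J) else 1)) * phi v.
Proof.
rewrite /logical_gate.
set F := fun J : {set 'I_K} => CU (R := R) J (aJb w b J).
rewrite (_ : flatten _ = map F (flatten [seq enum [set J : {set 'I_K} | #|J| == h] | h <- iota 1 K])); last first.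
  by rewrite map_flatten -map_comp.
rewrite (@prod_ops_map K _ F (fun J v => if vJ J v == 1 then omega_pow R (aJb w b J) else 1)); last first.
  by [].
congr (_ * _).
rewrite big_flatten /= big_map.
under eq_bigr => h _ do rewrite big_enum /=.
under eq_bigr => h _ do rewrite big_mkcond /=.
rewrite exchange_big /= [RHS]big_mkcond /=; apply: eq_bigr => J _.
under eq_bigr => h _ do rewrite inE.
rewrite (@prod_if_seq nat); last exact: iota_uniq.
rewrite mem_iota add1n ltnS card_gt0.
have HK : (#|J| <= K)%N by have := max_card J; rewrite card_ord.
by rewrite HK andbT.
Qed.
End Gate.
Section Code.
Variable R : realType.
Local Notation C := (R[i]).
Variable N : nat.
Hypothesis N1 : (1 < N)%N.
Local Notation e := (omega_pow R (N:=N)).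

Lemma coset_inv n (C1 C2 : {vspace 'rV['F_2]_n}) (b : 'rV['Z_N]_n) :
  (C2 <= C1)%VS -> H_N R C1 C2 b ->
  forall z x, z \in C1 -> (x - z) \in C2 ->
  e (dotN b (Defs.lift N x)) = e (dotN b (Defs.lift N z)).
Proof.
move=> /subvP sub HN z x zC1 xzC2.
pose m2 := fun y : 'rV['F_2]_n => (y - z) \in C2.
pose psi : state R n := fun y => if m2 y then 1 else 0.
have Qpsi : Qcode C1 C2 psi.
  move=> u v uC2 dv; apply: funext => y; rewrite /Xop /Zop /psi.
  have -> : m2 (y + u) = m2 y by rewrite /m2 addrAC (rpredDr _ uC2).
  case yz : (m2 y); last by rewrite mulr0.
  have yuC1 : y + u \in C1.
    have -> : y + u = (y - z) + z + u by rewrite subrK.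
    apply: rpredD; [apply: rpredD => //; exact: sub | exact: sub].
  move: dv => /forallP /(_ (y + u)) /implyP /(_ yuC1) /eqP ->.
  by rewrite mulr1.
have [phi Qphi Hpsi] := (proj1 (HN psi)) Qpsi.
have phiI : forall y u, u \in C2 -> phi (y + u) = phi y.
  move=> y u uC2; have := Qphi u 0 uC2.
  have d0 : dual C1 0.
    by apply/forallP => c; apply/implyP => _; rewrite /dot2 big1 // => i _; rewrite mxE mul0r.
  move=> /(_ d0) /(congr1 (fun f => f y)); rewrite /Xop /Zop.
  by rewrite /dot2 big1 ?mul1r // => i _; rewrite mxE mul0r.
have Hz : e (dotN b (Defs.lift N z)) * phi z = 1.
  by rewrite -Uop_eq // -Hpsi /psi /m2 subrr rpred0.
have Hx : e (dotN b (Defs.lift N x)) * phi z = 1.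
  have -> : phi z = phi x.
    by rewrite -(phiI z (x - z) xzC2) addrC subrK.
  by rewrite -Uop_eq // -Hpsi /psi /m2 xzC2.
have nz : phi z != 0.
  by apply/eqP => h; move: Hz; rewrite h mulr0 => /eqP; rewrite eq_sym oner_eq0.
by apply: (mulIf nz); rewrite Hx Hz.
Qed.
End Code.
Unset Implicit Arguments.
Theorem proposition3p13 (R : realType) (l n k2 K : nat) (hl : (0 < l)%N)
    (C1 C2 : {vspace 'rV['F_2]_n})
    (beta2 : k2.-tuple 'rV['F_2]_n) (w : K.-tuple 'rV['F_2]_n)
    (hb1 : basis_of C1 (beta2 ++ w)) (hb2 : basis_of C2 beta2)
    (b : 'rV['Z_(2 ^ l)]_n) (hbH : H_N R C1 C2 b) :
  is_logical_action C2 (fun j => tnth w j) (Uop (R := R) b)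
    (logical_gate (R := R) (fun j => tnth w j) b).
Proof.
have N1 : (1 < 2 ^ l)%N by rewrite -{1}(expn0 2) ltn_exp2l.
have sub21 : (C2 <= C1)%VS.
  by move: hb1 hb2 => /andP[/eqP <- _] /andP[/eqP <- _]; rewrite span_cat addvSl.
have wC1 j : tnth w j \in C1.
  by move: hb1 => /andP[/eqP <- _]; apply: memv_span; rewrite mem_cat mem_tnth orbT.
move=> phi; apply: funext => x.
rewrite Uop_eq // /encode big_distrr /=; apply: eq_bigr => v _.
rewrite gate_eq.
set z := \sum_i v ord0 i *: tnth w i.
have zC1 : z \in C1 by apply: memv_suml => i _; apply: memvZ.
have [xz|nxz] := boolP ((x - z) \in C2).
  rewrite (coset_inv N1 sub21 hbH zC1 xz) dot_lift (e_sum R N1) mulrA; congr (_ * _ * _).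
  apply: eq_bigr => J _; case: ifP => _ //; exact: e0.
rewrite /logical_state big1 ?mulr0 //.
move=> u uC2; case: eqP => // hx; exfalso.
by move: nxz; rewrite -/z hx addrK uC2.
Qed.
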